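(* For every odd positive integer $k$, there is a matroid in $\mathcal{D}$ that has a minor isomorphic to the binary projective geometry $PG(k-1,2)$. In particular, members of $\mathcal{D}$ can have arbitrarily large binary projective geometries as minors.
   Context: Relaxing a circuit-hyperplane $H$ of $M$ means forming the matroid on $E(M)$ whose bases are the bases of $M$ together with $H$. $\mathcal{D}$ is the collection of all matroids obtained from a connected binary matroid $M$ having two disjoint circuit-hyperplanes $X,Y$ with $X\cup Y=E(M)$ by relaxing both $X$ and $Y$ (the matroid on $E(M)$ whose bases are the bases of $M$ together with $X$ and $Y$). $PG(k-1,2)$ is the rank-$k$ binary projective geometry, i.e. the vector matroid of all $2^k-1$ nonzero vectors of $\mathrm{GF}(2)^k$. *)

(* Defs.v *)
From HB Require Import structures.
From mathcomp Require Import all_boot all_order all_algebra.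
Set Implicit Arguments. Unset Strict Implicit. Unset Printing Implicit Defensive.
Import GRing.Theory.

Record matroid (T : finType) := Matroid {
  ground : {set T};
  bases  : {set {set T}} }.

Definition is_matroid (T : finType) (M : matroid T) : Prop :=
  [/\ bases M != set0,
      (forall B, B \in bases M -> B \subset ground M) &
      (forall B1 B2, B1 \in bases M -> B2 \in bases M ->
         forall x, x \in B1 :\: B2 ->
         exists2 y, y \in B2 :\: B1 & (y |: (B1 :\ x)) \in bases M)].

Section MatroidNotions.
Variables (T : finType) (M : matroid T).

Definition mindep (X : {set T}) : bool :=
  [exists B in bases M, X \subset B].

Definition mrank (X : {set T}) : nat := \max_(B in bases M) #|B :&: X|.

Definition mcircuit (C : {set T}) : bool :=
  [&& C \subset ground M, ~~ mindep C &
      [forall Y : {set T}, (Y \proper C) ==> mindep Y]].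

Definition mclosure (X : {set T}) : {set T} :=
  [set x in ground M | mrank (x |: X) == mrank X].

Definition mflat (X : {set T}) : bool :=
  (X \subset ground M) && (mclosure X == X).

Definition mhyperplane (H : {set T}) : bool :=
  mflat H && ((mrank H).+1 == mrank (ground M)).

Definition circuit_hyperplane (H : {set T}) : bool :=
  mcircuit H && mhyperplane H.

Definition mconnected : Prop :=
  forall x y, x \in ground M -> y \in ground M -> x != y ->
    exists C, mcircuit C /\ x \in C /\ y \in C.

End MatroidNotions.

Section VectorMatroid.
Variables (T : finType) (n : nat) (f : T -> 'rV['F_2]_n).

(* X is independent iff the vectors f x (x in X) are distinct and linearly
   independent, i.e. the matrix with these rows has rank #|X| *)
Definition vindep (X : {set T}) : bool :=
  \rank (\matrix_(i < #|T|) (if enum_val i \in X then f (enum_val i) else 0%R))%R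
    == #|X|.

Definition vbasis (E B : {set T}) : bool :=
  [&& B \subset E, vindep B &
      [forall x in E :\: B, ~~ vindep (x |: B)]].

Definition vector_matroid (E : {set T}) : matroid T :=
  Matroid E [set B | vbasis E B].
End VectorMatroid.

Definition binary (T : finType) (M : matroid T) : Prop :=
  exists n (f : T -> 'rV['F_2]_n),
    forall B : {set T}, (B \in bases M) = vbasis f (ground M) B.

Definition relax2 (T : finType) (M : matroid T) (X Y : {set T}) : matroid T :=
  Matroid (ground M) (X |: (Y |: bases M)).

Definition in_D (T : finType) (N : matroid T) : Prop :=
  exists (M : matroid T) (X Y : {set T}),
    [/\ is_matroid M, binary M & mconnected M] /\
    [/\ circuit_hyperplane M X, circuit_hyperplane M Y,
        [disjoint X & Y], X :|: Y = ground M &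
        N = relax2 M X Y].

(* minor M / C \ D, with C, D disjoint subsets of E(M); its rank function is
   r(X) = r_M(X ∪ C) - r_M(C), its bases are the B ⊆ E - (C ∪ D) with
   r(B) = |B| = r(E - D) - r_M(C). *)
Definition minor_of (T : finType) (M : matroid T) (C D : {set T}) : matroid T :=
  Matroid (ground M :\: (C :|: D))
    [set B : {set T} | [&& B \subset ground M :\: (C :|: D),
                 mrank M (B :|: C) == #|B| + mrank M C &
                 #|B| + mrank M C == mrank M (ground M :\: D)]].

Definition miso (T1 T2 : finType) (M1 : matroid T1) (M2 : matroid T2) : Prop :=
  exists phi : T1 -> T2,
    [/\ {in ground M1 &, injective phi}, phi @: ground M1 = ground M2 &
        forall B : {set T1}, B \subset ground M1 ->
          (B \in bases M1) = (phi @: B \in bases M2)].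

Definition has_minor_iso (T1 T2 : finType) (M : matroid T1) (N : matroid T2) : Prop :=
  exists C D : {set T1},
    [/\ C \subset ground M, D \subset ground M, [disjoint C & D] &
        miso (minor_of M C D) N].

Definition PG2 (k : nat) : matroid 'rV['F_2]_k :=
  vector_matroid (fun v : 'rV['F_2]_k => v) [set v : 'rV['F_2]_k | v != 0%R].

(* Main.v *)
Require Import Defs.
From mathcomp Require Import all_boot all_order all_algebra zify.
Set Implicit Arguments. Unset Strict Implicit. Unset Printing Implicit Defensive.
Import GRing.Theory.

Module G.
Local Open Scope ring_scope.

Lemma F2cases (x : 'F_2) : x = 0 \/ x = 1.
Proof. case: x => [[|[|]]] //= H. left. apply/val_inj. done. right; apply/val_inj. done. Qed.

Lemma F2addvv (x : 'F_2) : x + x = 0.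
Proof. case: (F2cases x) => ->. by rewrite addr0. apply/val_inj. done. Qed.

Lemma mxaddvv m n (v : 'M['F_2]_(m, n)) : v + v = 0.
Proof. by apply/matrixP => i j; rewrite !mxE F2addvv. Qed.

Lemma mx_add_eq0 m n (a b : 'M['F_2]_(m, n)) : a + b = 0 -> a = b.
Proof. by move=> H; rewrite -[a]addr0 -(mxaddvv b) addrA H add0r. Qed.

Lemma set_ind (T : finType) (P : {set T} -> Prop) :
  P set0 -> (forall (x : T) (Z : {set T}), x \notin Z -> P Z -> P (x |: Z)) -> forall Z, P Z.
Proof.
move=> P0 PS Z; move: {2}#|Z| (erefl #|Z|) => m; elim: m Z => [|m IH] Z HZ.
  by move/eqP: HZ; rewrite cards_eq0 => /eqP ->.
have: (0 < #|Z|)%N by rewrite HZ.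
case/card_gt0P => x xZ; rewrite -(setD1K xZ); apply: PS; first by rewrite !inE eqxx.
apply: IH; move: HZ; rewrite (cardsD1 x Z) xZ add1n; by case.
Qed.

Section Gen.
Variables (T : finType) (n : nat) (f : T -> 'rV['F_2]_n).
Implicit Types (Z S B E H Y I : {set T}).

Definition mat (Z : {set T}) : 'M_(#|T|, n) :=
  \matrix_(i < #|T|) (if enum_val i \in Z then f (enum_val i) else 0).
Definition rk Z := \rank (mat Z).

Lemma mat_subP Z m (V : 'M_(m, n)) :
  reflect (forall z, z \in Z -> (f z <= V)%MS) (mat Z <= V)%MS.
Proof.
apply: (iffP row_subP) => H.
  move=> z zZ; have := H (enum_rank z); by rewrite rowK enum_rankK zZ.
move=> i; rewrite rowK; case: ifP => iZ; first exact: H.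
exact: sub0mx.
Qed.

Lemma f_sub_mat z Z : z \in Z -> (f z <= mat Z)%MS.
Proof. move=> zZ; have := row_sub (enum_rank z) (mat Z); by rewrite rowK enum_rankK zZ. Qed.

Lemma matS Z Z' : Z \subset Z' -> (mat Z <= mat Z')%MS.
Proof. move=> sZ; apply/mat_subP => z zZ; apply: f_sub_mat; exact: (subsetP sZ). Qed.

Lemma rkS Z Z' : Z \subset Z' -> (rk Z <= rk Z')%N.
Proof. by move=> sZ; apply: mxrankS; apply: matS. Qed.

Lemma spanP v Z :
  reflect (exists2 S : {set T}, S \subset Z & v = \sum_(s in S) f s) (v <= mat Z)%MS.
Proof.
apply: (iffP idP); last first.
  case=> S sSZ ->; apply: summx_sub => s sS; apply: f_sub_mat; exact: (subsetP sSZ).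
case/submxP => w ->; rewrite mulmx_sum_row.
exists [set t in Z | w 0 (enum_rank t) == 1]; first by apply/subsetP => t; rewrite inE => /andP[].
rewrite (reindex enum_rank); last by apply: onW_bij; exact: enum_rank_bij.
rewrite [RHS]big_mkcond /=; apply: eq_bigr => t _.
rewrite rowK enum_rankK inE; case: (t \in Z) => /=; last by rewrite scaler0.
by case: (F2cases (w 0 (enum_rank t))) => ->; rewrite ?scale0r ?scale1r.
Qed.

Lemma rkU1 x Z : rk (x |: Z) = (rk Z + ~~ (f x <= mat Z)%MS)%N.
Proof.
rewrite /rk; case: (boolP (f x <= mat Z)%MS) => H /=.
  rewrite addn0; apply/eqP; rewrite eqn_leq; apply/andP; split; apply: mxrankS.
    apply/mat_subP => z; rewrite !inE => /orP[/eqP -> //|]; exact: f_sub_mat.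
  by apply: matS; apply/subsetP => z zZ; rewrite !inE zZ orbT.
have lt: (mat Z < mat (x |: Z))%MS.
  rewrite ltmxE matS /=; last by apply/subsetP => z zZ; rewrite !inE zZ orbT. apply: contra H => H.
  apply: submx_trans H; apply: f_sub_mat; exact: setU11.
have le: (\rank (mat (x |: Z)) <= \rank (mat Z) + 1)%N.
  have sub: (mat (x |: Z) <= mat Z + f x)%MS.
    apply/mat_subP => z; rewrite !inE => /orP[/eqP ->|zZ]; first exact: addsmxSr.
    apply: submx_trans (addsmxSl _ _); exact: f_sub_mat.
  apply: leq_trans (mxrankS sub) _; apply: leq_trans (mxrank_adds_leqif _ _).1 _.
  by rewrite leq_add2l rank_leq_row.
have := rank_ltmx lt; move: le; rewrite addn1; move=> a b; apply/eqP; rewrite eqn_leq a b.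
by [].
Qed.

Lemma rk0 : rk set0 = 0%N.
Proof.
apply/eqP; rewrite /rk mxrank_eq0; apply/eqP/matrixP => i j; by rewrite !mxE inE !mxE.
Qed.

Lemma sum_setD1 m (v : T -> 'M['F_2]_(1, m)) x (A : {set T}) : x \in A ->
  \sum_(s in A) v s = v x + \sum_(s in A :\ x) v s.
Proof. by move=> xA; rewrite (big_setD1 x). Qed.

Lemma sum_setID m (v : T -> 'M['F_2]_(1, m)) (A B : {set T}) :
  \sum_(s in A) v s = \sum_(s in A :&: B) v s + \sum_(s in A :\: B) v s.
Proof. exact: big_setID. Qed.

Definition zsf (Z : {set T}) :=
  forall S : {set T}, S \subset Z -> \sum_(s in S) f s = 0 -> S = set0.

Lemma zsfS Z Z' : Z \subset Z' -> zsf Z' -> zsf Z.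
Proof. move=> sZ H S sS; apply: H; exact: subset_trans sZ. Qed.

Lemma rk_le_card Z : (rk Z <= #|Z|)%N.
Proof.
elim/set_ind: Z => [|x Z xZ IH]; first by rewrite rk0 cards0.
rewrite rkU1 cardsU1 xZ /= add1n; case: (~~ _) => /=; first by rewrite addn1 ltnS.
rewrite addn0; exact: leq_trans IH (leqnSn _).
Qed.

Lemma indepP Z : rk Z = #|Z| <-> zsf Z.
Proof.
elim/set_ind: Z => [|x Z xZ IH].
  rewrite rk0 cards0; split=> // _ S; rewrite subset0 => /eqP -> //.
rewrite rkU1 cardsU1 xZ add1n; split.
  move=> E.
  have [rZ H] : rk Z = #|Z| /\ ~~ (f x <= mat Z)%MS.
    have := rk_le_card Z; move: E; case: (~~ _) => /=.
      by rewrite addn1 => [[->]].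
    by rewrite addn0 => ->; rewrite ltnn.
  have zZ := (IH.1 rZ).
  move=> S sS S0; case: (boolP (x \in S)) => xS.
    exfalso; move: H; apply/negP; rewrite negbK; apply/spanP; exists (S :\ x).
      apply/subsetP => s; rewrite !inE => /andP[sx sS'].
      by move: (subsetP sS s sS'); rewrite !inE (negbTE sx).
    by apply: mx_add_eq0; rewrite -big_setD1.
  apply: zZ S0; apply/subsetP => s sS'; have := subsetP sS s sS'.
  rewrite !inE => /orP[/eqP E'|//]; by move: xS; rewrite -E' sS'.
move=> H; have zZ: zsf Z by apply: zsfS H; exact: subsetUr.
rewrite (IH.2 zZ); case: (boolP (f x <= mat Z)%MS) => [/spanP [S sS fx]|]; last by rewrite addn1.
exfalso; have: x |: S = set0.
  apply: H; first by apply: setUS.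
  rewrite big_setU1 /=; first by rewrite fx mxaddvv.
  apply: contra xZ; exact: (subsetP sS).
by move/setP/(_ x); rewrite !inE eqxx.
Qed.

Lemma indepS Z Z' : Z \subset Z' -> rk Z' = #|Z'| -> rk Z = #|Z|.
Proof. move=> s /indepP H; apply/indepP; exact: zsfS H. Qed.

Lemma vbasisE E B :
  Defs.vbasis f E B = [&& B \subset E, rk B == #|B| & (rk E <= rk B)%N].
Proof.
rewrite /Defs.vbasis /vindep -/(mat _) -/(rk _).
case sBE: (B \subset E) => //=; case: (boolP (rk B == #|B|)) => //= /eqP iB.
apply/forallP/idP.
  move=> H; apply: mxrankS; apply/mat_subP => z zE.
  case: (boolP (z \in B)) => zB; first exact: f_sub_mat.
  have := H z; rewrite inE zB zE /= -/(mat _) -/(rk _) rkU1 cardsU1 zB iB /=.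
  case: (f z <= mat B)%MS => //=; by rewrite addn1 add1n eqxx.
move=> le x; apply/implyP; rewrite inE => /andP[xB xE].
rewrite /vindep -/(mat _) -/(rk _) cardsU1 xB /=.
have : (rk (x |: B) <= rk E)%N by apply: rkS; rewrite subUset sBE sub1set xE.
move=> h; apply/negP => /eqP E'; move: h; rewrite E' add1n; move=> h.
have := leq_trans h le; by rewrite iB ltnn.
Qed.

Lemma extend E Z : Z \subset E -> rk Z = #|Z| ->
  exists2 B, Defs.vbasis f E B & Z \subset B.
Proof.
move: {2}#|E :\: Z| (erefl #|E :\: Z|) => m; elim: m Z => [|m IH] Z HZ sZE iZ.
  exists Z => //; rewrite vbasisE sZE iZ eqxx /= -iZ; apply: rkS.
  by move/eqP: HZ; rewrite cards_eq0 setD_eq0.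
case: (pickP [pred x | (x \in E :\: Z) && ~~ (f x <= mat Z)%MS]) => [x /andP[xEZ nsp]|H].
  move: xEZ; rewrite inE => /andP[xZ xE].
  have [B bB sB] : exists2 B, Defs.vbasis f E B & (x |: Z) \subset B.
    apply: IH.
    - move: HZ; rewrite (cardsD1 x) inE xZ xE add1n => [[<-]]; apply: eq_card => y.
      by rewrite !inE negb_or; case: (y == x); case: (y \in Z); case: (y \in E).
    - by rewrite subUset sub1set xE sZE.
    - by rewrite rkU1 cardsU1 xZ nsp iZ addn1 add1n.
  exists B => //; apply: subset_trans sB; exact: subsetUr.
exists Z => //; rewrite vbasisE sZE iZ eqxx /= -iZ; apply: mxrankS; apply/mat_subP => z zE.
case: (boolP (z \in Z)) => zZ; first exact: f_sub_mat.
have := H z; rewrite /= inE zZ zE /=; by move/negbFE.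
Qed.

Lemma basis_rk E B : Defs.vbasis f E B -> rk B = #|B| /\ rk B = rk E.
Proof.
rewrite vbasisE => /and3P[sBE /eqP iB le]; split=> //.
by apply/eqP; rewrite eqn_leq le rkS.
Qed.

Lemma is_matroid_vm E : is_matroid (vector_matroid f E).
Proof.
split.
- have [B bB _] := extend (sub0set E) (etrans rk0 (esym (cards0 T))).
  by apply/set0Pn; exists B; rewrite inE.
- move=> B; rewrite /= inE vbasisE => /andP[] //.
move=> B1 B2; rewrite /= !inE => b1 b2 x; rewrite inE => /andP[xB2 xB1].
have [i1 r1] := basis_rk b1; have [i2 r2] := basis_rk b2.
have iB0 : rk (B1 :\ x) = #|B1 :\ x|.
  by apply: (indepS _ i1); exact: subsetDl.
have cB1 : #|B1| = (#|B1 :\ x|).+1 by rewrite (cardsD1 x) xB1.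
case: (pickP [pred y | (y \in B2) && ~~ (f y <= mat (B1 :\ x))%MS]) => [y /andP[yB2 nsp]|H].
  have yB0 : y \notin B1 :\ x by apply: contra nsp; exact: f_sub_mat.
  have yx : y != x by apply: contraNneq xB2 => <-.
  have yB1 : y \notin B1 by move: yB0; rewrite !inE yx.
  exists y; first by rewrite inE yB2 yB1.
  rewrite inE vbasisE; apply/and3P; split.
  - rewrite subUset sub1set; apply/andP; split.
      by move: b2; rewrite vbasisE => /andP[/subsetP ->].
    apply: subset_trans (subsetDl _ _) _; by move: b1; rewrite vbasisE => /andP[].
  - by rewrite rkU1 cardsU1 yB0 nsp iB0 addn1 add1n.
  - by rewrite rkU1 nsp iB0 addn1 -cB1 -r1 i1.
exfalso.
have : (rk B2 <= rk (B1 :\ x))%N.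
  apply: mxrankS; apply/mat_subP => z zB2; have := H z; rewrite /= zB2 /=; by move/negbFE.
by rewrite r2 -r1 iB0 i1 cB1 ltnn.
Qed.

Lemma mrank_vm E Z : Z \subset E -> mrank (vector_matroid f E) Z = rk Z.
Proof.
move=> sZE; apply/eqP; rewrite eqn_leq; apply/andP; split.
  apply/bigmax_leqP => B; rewrite inE => bB.
  have [iB _] := basis_rk bB.
  rewrite -(indepS (subsetIl B Z) iB); apply: rkS; exact: subsetIr.
have [I bI _] := extend (sub0set Z) (etrans rk0 (esym (cards0 T))).
have [iI rI] := basis_rk bI.
have sIZ : I \subset Z by move: bI; rewrite vbasisE => /andP[].
have [B bB sIB] := extend (subset_trans sIZ sZE) iI.
rewrite -rI iI; apply: leq_trans (leq_bigmax_cond _ _); last by rewrite inE; exact: bB.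
by apply: subset_leq_card; rewrite subsetI sIB sIZ.
Qed.

Lemma mindep_vm E Z : Z \subset E -> mindep (vector_matroid f E) Z = (rk Z == #|Z|).
Proof.
move=> sZE; apply/existsP/eqP.
  case=> B /andP[]; rewrite inE => bB sZB; have [iB _] := basis_rk bB.
  exact: indepS sZB iB.
move=> iZ; have [B bB sZB] := extend sZE iZ; exists B; by rewrite inE bB.
Qed.

Lemma mcircuit_vm E Z z0 : Z \subset E -> z0 \in Z ->
  f z0 = \sum_(s in Z :\ z0) f s -> rk (Z :\ z0) = #|Z :\ z0| ->
  mcircuit (vector_matroid f E) Z.
Proof.
move=> sZE z0Z fz0 iZ0; have zZ0 := (indepP _).1 iZ0.
apply/and3P; split => //.
  rewrite mindep_vm //; apply/negP => /eqP /indepP H.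
  have : Z = set0 by apply: H => //; rewrite (sum_setD1 _ z0Z) -fz0 mxaddvv.
  by move/setP/(_ z0); rewrite z0Z inE.
apply/forallP => Y; apply/implyP; rewrite properE => /andP[sYZ nZY].
rewrite mindep_vm; last exact: subset_trans sYZ sZE.
apply/eqP/indepP => S sSY S0.
case: (boolP (z0 \in S)) => z0S; last first.
  apply: zZ0 S0; apply/subsetP => s sS; rewrite !inE (subsetP sYZ s (subsetP sSY s sS)) andbT.
  by apply/eqP => E'; move: z0S; rewrite -E' sS.
exfalso; move: nZY; apply/negP; rewrite negbK.
have e1 : \sum_(s in S :\ z0) f s = f z0.
  by apply/esym/mx_add_eq0; rewrite -big_setD1.
have sS0 : S :\ z0 \subset Z :\ z0 by apply: setSD; exact: subset_trans sSY sYZ.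
have : (Z :\ z0) :\: (S :\ z0) = set0.
  apply: zZ0; first exact: subsetDl.
  have := sum_setID f (Z :\ z0) (S :\ z0).
  rewrite (setIidPr sS0) e1 -fz0 => h; apply/esym.
  by apply: (addrI (f z0)); rewrite -h addr0.
move=> h; apply/subsetP => z zZ; apply: (subsetP sSY).
case: (boolP (z == z0)) => [/eqP -> //| zz0].
have : z \notin (Z :\ z0) :\: (S :\ z0) by rewrite h inE.
by rewrite !inE zz0 zZ /= andbT negbK.
Qed.

Lemma mclosure_vm E H : H \subset E ->
  mclosure (vector_matroid f E) H = [set x in E | (f x <= mat H)%MS].
Proof.
move=> sHE; apply/setP => x; rewrite !inE /=; case xE: (x \in E) => //=.
rewrite !mrank_vm //; last by rewrite subUset sub1set xE.
rewrite rkU1; by case: (f x <= mat H)%MS; rewrite ?addn0 ?addn1 ?eqxx ?(gtn_eqF (ltnSn _)).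
Qed.

Lemma span_lin (g : 'rV['F_2]_n -> 'F_2) Z v :
  (forall a b, g (a + b) = g a + g b) -> g 0 = 0 ->
  (forall z, z \in Z -> g (f z) = 0) -> (v <= mat Z)%MS -> g v = 0.
Proof.
move=> gD g0 gZ /spanP [S sS ->].
apply: (big_ind (fun v => g v = 0)) => //.
  by move=> a b ha hb; rewrite gD ha hb addr0.
move=> s sS'; apply: gZ; exact: (subsetP sS).
Qed.

End Gen.

End G.
Import G.
Local Open Scope ring_scope.

Lemma F2nat (m : nat) : (m%:R : 'F_2) = (odd m)%:R.
Proof.
elim: m => [//|m IH]; rewrite -natr1 IH /=.
by case: (odd m) => /=; [rewrite F2addvv | rewrite add0r].
Qed.

Lemma F2neq (x : 'F_2) : x != 1 -> x = 0.
Proof. by case: (F2cases x) => -> //; rewrite eqxx. Qed.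

Lemma F2_10 : (1 : 'F_2) != 0.
Proof. by []. Qed.

Section Constr.
Variable k : nat.

Definition Ap := (('I_k + 'rV['F_2]_k) + bool)%type.
Definition A := option Ap.
Definition YS := (bool + ('rV['F_2]_k + 'I_k))%type.
Definition TT := (option Ap + option YS)%type.

Definition FY (s : YS) (c : A) : 'F_2 :=
 match c with
 | None => 1
 | Some a =>
  match s with
  | inl true => 0
  | inl false => if a is inr _ then 1 else 0
  | inr (inl w) => match a with
      | inl (inl j) => w 0 j
      | inl (inr w') => (w' == w)%:R
      | inr true => 1 + \sum_j w 0 j
      | inr false => 0 end
  | inr (inr j) => match a with
      | inl (inl j') => (j' == j)%:R
      | inr true => 1
      | _ => 0 end
  end end.

Definition F (t : TT) (c : A) : 'F_2 :=
 match t with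
 | inl (Some a) => (c == Some a)%:R
 | inl None => if c is Some _ then 1 else 0
 | inr (Some s) => FY s c
 | inr None => \sum_s FY s c
 end.

Definition vec (g : A -> 'F_2) : 'rV['F_2]_#|{: A}| := \row_i g (enum_val i).
Definition f t := vec (F t).

Lemma vecE g c : vec g 0 (enum_rank c) = g c.
Proof. by rewrite mxE enum_rankK. Qed.

Lemma vec_eq g h : (forall c, g c = h c) -> vec g = vec h.
Proof. by move=> H; apply/rowP => i; rewrite !mxE H. Qed.

Lemma vec_eq0 g : vec g = 0 -> forall c, g c = 0.
Proof. by move=> H c; rewrite -vecE H mxE. Qed.

Lemma vec_sum (I : finType) (P : pred I) (G : I -> A -> 'F_2) :
  \sum_(i | P i) vec (G i) = vec (fun c => \sum_(i | P i) G i c).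
Proof. by apply/rowP => j; rewrite summxE !mxE; apply: eq_bigr => i _; rewrite mxE. Qed.

Lemma vec_row (v : 'rV['F_2]_#|{: A}|) : v = vec (fun c => v 0 (enum_rank c)).
Proof. by apply/rowP => i; rewrite mxE enum_valK. Qed.

Definition xa a : TT := inl (Some a).
Definition xs : TT := inl None.
Definition ym s : TT := inr (Some s).
Definition y0 : TT := ym (inl true).
Definition ypp : TT := ym (inl false).
Definition yw w : TT := ym (inr (inl w)).
Definition yj j : TT := ym (inr (inr j)).
Definition ys : TT := inr None.
Definition cel (c : A) : TT := if c is Some a then xa a else y0.

Lemma Fcel c c' : F (cel c) c' = (c' == c)%:R.
Proof. by case: c => [a|] //=; case: c'. Qed.

Lemma cel_inj : injective cel.
Proof. by case=> [a|] [b|] //= [->]. Qed.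

Definition X : {set TT} := [set t | if t is inl _ then true else false].
Definition Y : {set TT} := [set t | if t is inl _ then false else true].
Definition U : {set TT} := cel @: setT.

Notation rk := (rk f).

Lemma peel (Z Z' : {set TT}) :
  (forall z, z \in Z -> z \notin Z' -> exists c, F z c = 1 /\
     forall z', z' \in Z -> z' != z -> F z' c = 0) ->
  rk Z' = #|Z'| -> rk Z = #|Z|.
Proof.
move=> H /indepP iZ'; apply/indepP => S sSZ S0.
apply: (iZ' _ _ S0); apply/subsetP => s sS; apply/negPn/negP => sZ'.
have [c [Fs Fo]] := H s (subsetP sSZ s sS) sZ'.
have := vec_eq0 (etrans (esym (vec_sum _ _)) S0) c.
rewrite (bigD1 s) //= Fs big1 ?addr0 //.
move=> z /andP[zS zs]; apply: Fo => //; exact: subsetP sSZ z zS.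
Qed.

Lemma U_indep (Z : {set TT}) : Z \subset U -> rk Z = #|Z|.
Proof.
move=> sZU; apply: (@peel Z set0); last by rewrite rk0 cards0.
move=> z zZ _; have := subsetP sZU z zZ; case/imsetP => c _ ->.
exists c; rewrite Fcel eqxx; split => // z' z'Z; have := subsetP sZU z' z'Z.
case/imsetP => c' _ -> ne; rewrite Fcel; case: eqP => // E; by rewrite E eqxx in ne.
Qed.


Lemma sum_delta (I : finType) (P : pred I) (b : I) :
  \sum_(a | P a) ((b == a)%:R : 'F_2) = (P b)%:R.
Proof.
case Pb: (P b); last by rewrite big1 // => a Pa; case: eqP => // E; rewrite E Pa in Pb.
rewrite (bigD1 b) //= eqxx big1 ?addr0 // => a /andP[_ ab]; by rewrite eq_sym (negbTE ab).
Qed.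

Lemma xa_inj : injective xa. Proof. by move=> a b [->]. Qed.
Lemma ym_inj : injective ym. Proof. by move=> a b [->]. Qed.

Lemma XD1 : X :\ xs = xa @: setT.
Proof.
apply/setP => t; rewrite !inE; case: t => [[a|]|s] /=; last by apply/esym/imsetP => [[a _]].
  by apply/esym/imsetP; exists a.
by apply/esym/imsetP => [[a _]].
Qed.

Lemma YD1 : Y :\ ys = ym @: setT.
Proof.
apply/setP => t; rewrite !inE; case: t => [a|[s|]] /=; first by apply/esym/imsetP => [[s _]].
  by apply/esym/imsetP; exists s.
by apply/esym/imsetP => [[s _]].
Qed.

Lemma xs_in : xs \in X. Proof. by rewrite inE. Qed.
Lemma ys_in : ys \in Y. Proof. by rewrite inE. Qed.

Lemma f_xs : f xs = \sum_(s in X :\ xs) f s.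
Proof.
rewrite XD1 big_imset /=; last by move=> a b _ _; apply: xa_inj.
rewrite vec_sum; apply: vec_eq => [[b|]] /=; last by rewrite big1.
by rewrite sum_delta inE.
Qed.

Lemma f_ys : f ys = \sum_(s in Y :\ ys) f s.
Proof.
rewrite YD1 big_imset /=; last by move=> a b _ _; apply: ym_inj.
rewrite vec_sum; apply: vec_eq => c /=; by apply: eq_bigl => s; rewrite inE.
Qed.

Lemma XD1_indep : rk (X :\ xs) = #|X :\ xs|.
Proof.
apply: U_indep; rewrite XD1; apply/subsetP => t /imsetP[a _ ->].
by apply/imsetP; exists (Some a).
Qed.

Lemma y0_inU : y0 \in U. Proof. by apply/imsetP; exists None. Qed.
Lemma xa_inU a : xa a \in U. Proof. by apply/imsetP; exists (Some a). Qed.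

Lemma YD1_indep : rk (Y :\ ys) = #|Y :\ ys|.
Proof.
rewrite YD1.
apply: (@peel _ (y0 |: (yj @: setT))).
  move=> z /imsetP[s _ ->]; case: s => [[|]|[w|j]].
  - by rewrite !inE eqxx.
  - move=> _; exists (Some (inr false)); split => // z' /imsetP[s' _ ->].
    by case: s' => [[|]|[w'|j']].
  - move=> _; exists (Some (inl (inr w))); split; first by rewrite /= eqxx.
    move=> z' /imsetP[s' _ ->]; case: s' => [[|]|[w'|j']] //= ne.
    case: eqP => // E; by rewrite E eqxx in ne.
  - by move=> H; exfalso; move: H; rewrite !inE; case/norP => _ /negP; apply; apply/imsetP; exists j.
apply: (@peel _ U); last by apply: U_indep.
move=> z; rewrite !inE => /orP[/eqP ->|/imsetP[j _ ->]]; first by rewrite y0_inU.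
move=> _; exists (Some (inl (inl j))); split; first by rewrite /= eqxx.
move=> z'; rewrite !inE => /orP[/eqP -> //|/imsetP[j' _ ->]] /= ne.
case: eqP => // E; by rewrite E eqxx in ne.
Qed.

Lemma X_circuit : mcircuit (vector_matroid f setT) X.
Proof. apply: (mcircuit_vm (z0 := xs)); [exact: subsetT | exact: xs_in | exact: f_xs | exact: XD1_indep]. Qed.

Lemma Y_circuit : mcircuit (vector_matroid f setT) Y.
Proof. apply: (mcircuit_vm (z0 := ys)); [exact: subsetT | exact: ys_in | exact: f_ys | exact: YD1_indep]. Qed.

Lemma card_Ap : #|{: Ap}| = (k + 2 ^ k + 2)%N.
Proof. by rewrite /Ap !card_sum card_ord card_mx card_Fp // card_bool mul1n. Qed.
Lemma card_YS : #|{: YS}| = (2 + (2 ^ k + k))%N.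
Proof. by rewrite /YS !card_sum card_ord card_mx card_Fp // card_bool mul1n. Qed.
Lemma card_A : #|{: A}| = (#|{: Ap}|).+1.
Proof. by rewrite /A card_option. Qed.

Lemma sum1 (I : finType) : \sum_(i : I) (1 : 'F_2) = (odd #|{: I}|)%:R.
Proof. by rewrite sumr_const -F2nat. Qed.

Hypothesis kodd : odd k.

Lemma odd_Ap : odd #|{: Ap}|.
Proof. rewrite card_Ap !oddD oddX kodd /=; by case: k kodd. Qed.
Lemma odd_YS : odd #|{: YS}|.
Proof. rewrite card_YS !oddD oddX kodd /=; by case: k kodd. Qed.

Definition phiX (v : 'rV['F_2]_#|{: A}|) : 'F_2 := v 0 (enum_rank (None : A)).
Definition phiY (v : 'rV['F_2]_#|{: A}|) : 'F_2 := \sum_(a : Ap) v 0 (enum_rank (Some a)).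

Lemma phiX_add a b : phiX (a + b) = phiX a + phiX b. Proof. by rewrite /phiX mxE. Qed.
Lemma phiY_add a b : phiY (a + b) = phiY a + phiY b.
Proof. by rewrite /phiY -big_split; apply: eq_bigr => c _; rewrite mxE. Qed.
Lemma phiX0 : phiX 0 = 0. Proof. by rewrite /phiX mxE. Qed.
Lemma phiY0 : phiY 0 = 0. Proof. by rewrite /phiY big1 // => c _; rewrite mxE. Qed.

Lemma phiX_f t : phiX (f t) = F t None. Proof. by rewrite /phiX /f vecE. Qed.
Lemma phiY_f t : phiY (f t) = \sum_(a : Ap) F t (Some a).
Proof. by rewrite /phiY /f; apply: eq_bigr => a _; rewrite vecE. Qed.

Lemma phiX_X t : t \in X -> phiX (f t) = 0.
Proof. by rewrite phiX_f inE; case: t => // [[a|]]. Qed.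
Lemma phiX_Y t : t \in Y -> phiX (f t) = 1.
Proof.
rewrite phiX_f inE; case: t => // [[s|]] _ //=.
by rewrite sum1 odd_YS.
Qed.

Lemma FY_sum s : \sum_(a : Ap) FY s (Some a) = 0.
Proof.
rewrite /Ap big_sumType /= big_sumType /= big_bool /=.
case: s => [[|]|[w|j]] /=.
- by rewrite !big1 //; apply/val_inj.
- by rewrite !big1 //; apply/val_inj.
- rewrite (eq_bigr (fun w' => ((w == w')%:R : 'F_2))); last by move=> w' _; rewrite eq_sym.
  rewrite sum_delta /=.
  by case: (F2cases (\sum_(j < k) w 0 j)) => ->; apply/val_inj.
- rewrite (eq_bigr (fun j' => ((j == j')%:R : 'F_2))); last by move=> j' _; rewrite eq_sym.
  by rewrite sum_delta big1 //; apply/val_inj.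
Qed.

Lemma phiY_Y t : t \in Y -> phiY (f t) = 0.
Proof.
rewrite phiY_f inE; case: t => // [[s|]] _ //=; first exact: FY_sum.
rewrite exchange_big big1 // => s _; exact: FY_sum.
Qed.

Lemma phiY_X t : t \in X -> phiY (f t) = 1.
Proof.
rewrite phiY_f inE; case: t => // [[b|]] _ /=; last by rewrite sum1 odd_Ap.
rewrite (eq_bigr (fun a => ((b == a)%:R : 'F_2))) ?sum_delta //.
by move=> a _; rewrite /= eq_sym.
Qed.

Definition M := vector_matroid f setT.

Lemma notX t : (t \notin X) = (t \in Y). Proof. by rewrite !inE; case: t. Qed.

Lemma X_closed t : (f t <= mat f X)%MS -> t \in X.
Proof.
move=> H; apply/negPn/negP; rewrite notX => tY.
have := span_lin phiX_add phiX0 phiX_X H; rewrite phiX_Y //; exact/eqP.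
Qed.

Lemma Y_closed t : (f t <= mat f Y)%MS -> t \in Y.
Proof.
move=> H; apply/negPn/negP => tY.
have tX : t \in X by rewrite -[_ \in X]negbK notX.
have := span_lin phiY_add phiY0 phiY_Y H; rewrite phiY_X //; exact/eqP.
Qed.

Lemma flat_of (H : {set TT}) : (forall t, (f t <= mat f H)%MS -> t \in H) -> mflat M H.
Proof.
move=> cl; apply/andP; split; first exact: subsetT.
rewrite /M mclosure_vm ?subsetT //; apply/eqP/setP => t; rewrite !inE /=.
apply/idP/idP; first exact: cl.
exact: f_sub_mat.
Qed.

Lemma rk_X : rk X = #|{: Ap}|.
Proof.
rewrite -(setD1K xs_in) rkU1.
have -> : (f xs <= mat f (X :\ xs))%MS by apply/spanP; exists (X :\ xs) => //; exact: f_xs.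
rewrite addn0 XD1_indep XD1 card_imset ?cardsT //; exact: xa_inj.
Qed.

Lemma rk_Y : rk Y = #|{: Ap}|.
Proof.
rewrite -(setD1K ys_in) rkU1.
have -> : (f ys <= mat f (Y :\ ys))%MS by apply/spanP; exists (Y :\ ys) => //; exact: f_ys.
rewrite addn0 YD1_indep YD1 card_imset ?cardsT //; last exact: ym_inj.
by rewrite card_YS card_Ap; lia.
Qed.

Lemma rk_T : rk setT = #|{: A}|.
Proof.
apply/eqP; rewrite eqn_leq rank_leq_col /=.
have := rkS f (subsetT U); rewrite U_indep // /U card_imset ?cardsT //; exact: cel_inj.
Qed.

Lemma mrankM Z : mrank M Z = rk Z.
Proof. exact: mrank_vm (subsetT Z). Qed.

Lemma X_ch : circuit_hyperplane M X.
Proof.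
apply/andP; split; first exact: X_circuit.
apply/andP; split; first by apply: flat_of; exact: X_closed.
by rewrite !mrankM rk_X rk_T card_A.
Qed.

Lemma Y_ch : circuit_hyperplane M Y.
Proof.
apply/andP; split; first exact: Y_circuit.
apply/andP; split; first by apply: flat_of; exact: Y_closed.
by rewrite !mrankM rk_Y rk_T card_A.
Qed.

Definition P1 y1 := [set a | F y1 (Some a) == 1].
Definition P0 y1 := [set a | F y1 (Some a) == 0].
Definition Z1 y1 := y1 |: (y0 |: xa @: P1 y1).
Definition Z2 y1 := y1 |: (y0 |: (xs |: xa @: P0 y1)).

Lemma FY_None t : t \in Y -> F t None = 1.
Proof. by move=> tY; rewrite -phiX_f phiX_Y. Qed.

Lemma y0_notxa (P : {set Ap}) : y0 \notin xa @: P.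
Proof. by apply/imsetP => -[a _]. Qed.

Lemma Y_notxa t (P : {set Ap}) : t \in Y -> t \notin xa @: P.
Proof. by move=> tY; apply/imsetP => -[a _ E]; move: tY; rewrite E inE. Qed.

Lemma Z1_circ y1 : y1 \in Y -> y1 != y0 -> mcircuit M (Z1 y1).
Proof.
move=> y1Y ne.
have nin : y1 \notin y0 |: xa @: P1 y1 by rewrite !inE negb_or ne Y_notxa.
apply: (mcircuit_vm (z0 := y1)); [exact: subsetT | exact: setU11 | |];
  rewrite /Z1 setU1K //.
  rewrite big_setU1 ?y0_notxa //= big_imset /=; last by move=> a b _ _; exact: xa_inj.
  rewrite vec_sum /f -[vec _ + _]/(vec (F y0) + vec _).
  have -> : vec (F y0) + vec (fun c => \sum_(i in P1 y1) F (xa i) c) =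
            vec (fun c => F y0 c + \sum_(i in P1 y1) F (xa i) c).
    by apply/rowP => i; rewrite !mxE.
  apply: vec_eq => -[b|] /=; last by rewrite big1 // addr0 FY_None.
  rewrite add0r (eq_bigr (fun a => ((b == a)%:R : 'F_2))); last by move=> a _.
  rewrite sum_delta inE; by case: (F2cases (F y1 (Some b))) => ->.
apply: U_indep; apply/subsetP => t; rewrite !inE => /orP[/eqP ->|/imsetP[a _ ->]].
  exact: y0_inU.
exact: xa_inU.
Qed.

Lemma Z2_circ y1 b0 : y1 \in Y -> F y1 (Some b0) = 1 -> mcircuit M (Z2 y1).
Proof.
move=> y1Y Fb0.
have ne : y1 != y0 by apply: contra_eq_neq Fb0 => ->.
have nin : y1 \notin y0 |: (xs |: xa @: P0 y1).
  by rewrite !inE !negb_or ne Y_notxa // andbT; apply/eqP => E; move: y1Y; rewrite E inE.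
apply: (mcircuit_vm (z0 := y1)); [exact: subsetT | exact: setU11 | |];
  rewrite /Z2 setU1K //.
  rewrite big_setU1; last by rewrite !inE negb_or y0_notxa.
  rewrite big_setU1 /=; last by apply/negP => /imsetP [a _].
  rewrite big_imset /=; last by move=> a b _ _; exact: xa_inj.
  rewrite vec_sum /f.
  have -> : vec (F y0) + (vec (F xs) + vec (fun c => \sum_(i in P0 y1) F (xa i) c)) =
            vec (fun c => F y0 c + (F xs c + \sum_(i in P0 y1) F (xa i) c)).
    by apply/rowP => i; rewrite !mxE.
  apply: vec_eq => -[b|] /=; last by rewrite big1 // !addr0 FY_None.
  rewrite add0r (eq_bigr (fun a => ((b == a)%:R : 'F_2))); last by move=> a _.
  rewrite sum_delta inE; case: (F2cases (F y1 (Some b))) => ->; by apply/val_inj.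
apply: (@peel _ U); last by apply: U_indep.
move=> z; rewrite !inE => /orP[/eqP -> |/orP[/eqP -> |/imsetP[a _ ->]]].
- by rewrite y0_inU.
- move=> _; exists (Some b0); split => // z' Hz' nz'.
  move: Hz'; rewrite !inE => /orP[/eqP -> //|/orP[/eqP E|/imsetP[a Pa E]]].
    by rewrite E eqxx in nz'.
  rewrite E /=; move: Pa; rewrite inE => /eqP Fa.
  case: eqP => // -[E']; by move: Fa; rewrite -E' Fb0.
- by rewrite xa_inU.
Qed.

Lemma Y_b0 y : y \in Y -> y != y0 -> exists b0, F y (Some b0) = 1.
Proof.
case: y => [t|[s|]]; first by rewrite inE.
  case: s => [[|]|[w|j]] _ ne //=.
  - by exists (inr false).
  - by exists (inl (inr w)); rewrite eqxx.
  - by exists (inl (inl j)); rewrite eqxx.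
move=> _ _; exists (inr false) => /=.
rewrite (bigD1 (inl false)) //= big1 ?addr0 // => -[[|]|[w|j]] //=.
Qed.

Lemma conn_XY x y : x \in X -> y \in Y -> exists C, [/\ mcircuit M C, x \in C & y \in C].
Proof.
move=> xX yY.
pose y1 := if y == y0 then ypp else y.
have y1Y : y1 \in Y by rewrite /y1; case: (@eqP _ y y0) => // _; rewrite inE.
have y1n : y1 != y0 by rewrite /y1; case: (@eqP _ y y0) => [_|/eqP //].
have [b0 Fb0] := Y_b0 y1Y y1n.
have yin : forall C : {set TT}, y1 \in C -> y0 \in C -> y \in C.
  by move=> C a b; rewrite /y1 in a; move: a; case: eqP => [->|] .
case: x xX => [[a|]|s] xX; last by move: xX; rewrite inE.
  case: (boolP (F y1 (Some a) == 1)) => Fa.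
    exists (Z1 y1); split; first exact: Z1_circ.
    - by rewrite !inE; apply/orP; right; apply/orP; right; apply/imsetP; exists a; rewrite ?inE.
    - by apply: yin; rewrite !inE eqxx ?orbT.
  exists (Z2 y1); split; first exact: Z2_circ Fb0.
  - rewrite !inE; apply/orP; right; apply/orP; right; apply/orP; right.
    by apply/imsetP; exists a; rewrite // inE; apply/eqP; apply: F2neq.
  - by apply: yin; rewrite !inE eqxx ?orbT.
exists (Z2 y1); split; first exact: Z2_circ Fb0.
- by rewrite !inE eqxx ?orbT.
- by apply: yin; rewrite !inE eqxx ?orbT.
Qed.

Lemma M_connected : mconnected M.
Proof.
move=> x y _ _ ne.
case xX: (x \in X); case yX: (y \in X).
- by exists X; split => //; exact: X_circuit.
- have yY : y \in Y by rewrite -notX yX.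
  by have [C [? ? ?]] := conn_XY xX yY; exists C.
- have xY : x \in Y by rewrite -notX xX.
  by have [C [? ? ?]] := conn_XY yX xY; exists C.
- have xY : x \in Y by rewrite -notX xX.
  have yY : y \in Y by rewrite -notX yX.
  by exists Y; split => //; exact: Y_circuit.
Qed.

Definition isJ (c : A) : bool := if c is Some (inl (inl _)) then true else false.
Definition Cc : {set TT} := cel @: [set c | ~~ isJ c].
Definition Sc : {set TT} := yw @: [set w | w != 0].
Definition Dc : {set TT} := ~: (Cc :|: Sc).
Definition N := relax2 M X Y.
Definition phi (t : TT) : 'rV['F_2]_k := if t is inr (Some (inr (inl w))) then w else 0.
Definition pc : Ap := inr true.

Lemma y0_C : y0 \in Cc. Proof. by apply/imsetP; exists None; rewrite ?inE. Qed.
Lemma xp_C : xa pc \in Cc. Proof. by apply/imsetP; exists (Some pc); rewrite ?inE. Qed.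
Lemma C_U : Cc \subset U.
Proof. by apply/subsetP => t /imsetP[c _ ->]; apply/imsetP; exists c. Qed.
Lemma S_C t : t \in Sc -> t \notin Cc.
Proof. by case/imsetP => w _ ->; apply/negP => /imsetP[[c|] _]. Qed.

Lemma phi_inj : {in Sc &, injective phi}.
Proof. by move=> a b /imsetP[w _ ->] /imsetP[w' _ ->] /= ->. Qed.

Lemma mrankN (Z : {set TT}) : y0 \in Z -> xa pc \in Z -> mrank N Z = rk Z.
Proof.
move=> y0Z xpZ; rewrite -mrankM; apply/eqP; rewrite eqn_leq; apply/andP; split; last first.
  apply/bigmax_leqP => B BM; apply: (leq_bigmax_cond (F := fun B => #|B :&: Z|)).
  by rewrite /N /= !in_setU1 BM !orbT.
apply/bigmax_leqP => B; rewrite /N /= !inE => /orP[/eqP ->|/orP[/eqP ->|BM]].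
- pose I := y0 |: ((X :&: Z) :\ xs).
  have y0n : y0 \notin (X :&: Z) :\ xs by rewrite !inE.
  have iI : rk I = #|I|.
    apply: U_indep; apply/subsetP => t; rewrite !inE => /orP[/eqP ->|]; first exact: y0_inU.
    case/and3P => txs; case: t txs => [[a|]|s] //= _ _ _; exact: xa_inU.
  apply: (@leq_trans #|I|).
    by rewrite cardsU1 y0n (cardsD1 xs (X :&: Z)) add1n; case: (xs \in _).
  rewrite -iI mrankM; apply: rkS; apply/subsetP => t; rewrite !inE => /orP[/eqP -> //|].
  by case/and3P.
- pose J := (Y :&: Z) :\ ys.
  have xJ : xa pc \notin J by rewrite !inE.
  have iJ : rk J = #|J| by apply: (indepS _ YD1_indep); apply: setSD; exact: subsetIl.
  have iI : rk (xa pc |: J) = #|xa pc |: J|.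
    rewrite rkU1 cardsU1 xJ iJ add1n addnC.
    have -> : ~~ (f (xa pc) <= mat f J)%MS.
      apply/negP => H; have := span_lin phiY_add phiY0 _ H.
      rewrite phiY_X ?inE // => h; have : (1 : 'F_2) = 0 by apply: h => z; rewrite in_setD1 in_setI => /andP[_ /andP[zY _]]; exact: phiY_Y.
      by move/eqP.
    by [].
  apply: (@leq_trans #|xa pc |: J|).
    by rewrite cardsU1 xJ (cardsD1 ys (Y :&: Z)) add1n; case: (ys \in _).
  rewrite -iI mrankM; apply: rkS; apply/subsetP => t; rewrite !inE => /orP[/eqP -> //|].
  by case/and3P.
- by apply: (leq_bigmax_cond (F := fun B => #|B :&: Z|)); rewrite /M /= inE.
Qed.

Definition proj (v : 'rV['F_2]_#|{: A}|) : 'rV['F_2]_k :=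
  \row_j v 0 (enum_rank (Some (inl (inl j)) : A)).

Lemma proj_sum (P : {set TT}) (G : TT -> 'rV['F_2]_#|{: A}|) :
  proj (\sum_(s in P) G s) = \sum_(s in P) proj (G s).
Proof. by apply/rowP => j; rewrite !mxE summxE [RHS]summxE; apply: eq_bigr => s _; rewrite mxE. Qed.

Lemma proj_add a b : proj (a + b) = proj a + proj b.
Proof. by apply/rowP => j; rewrite !mxE. Qed.

Lemma proj_S t : t \in Sc -> proj (f t) = phi t.
Proof. by case/imsetP => w _ ->; apply/rowP => j; rewrite mxE vecE. Qed.

Lemma proj_C t : t \in Cc -> proj (f t) = 0.
Proof.
case/imsetP => c; rewrite inE => nJ ->; apply/rowP => j; rewrite !mxE enum_rankK Fcel.
by case: eqP => // E; rewrite -E in nJ.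
Qed.

Notation rkP := (G.rk (fun v : 'rV['F_2]_k => v)).

Lemma span_equiv x (Z : {set TT}) : x \in Sc -> Z \subset Sc ->
  (f x <= mat f (Z :|: Cc))%MS = (phi x <= mat (fun v : 'rV['F_2]_k => v) (phi @: Z))%MS.
Proof.
move=> xS ZS; apply/idP/idP.
  case/spanP => P sP fx; apply/spanP; exists (phi @: (P :&: Z)); first by apply: imsetS; exact: subsetIr.
  rewrite big_imset /=; last by move=> a b /setIP[_ /(subsetP ZS) aS] /setIP[_ /(subsetP ZS) bS]; exact: phi_inj.
  rewrite -proj_S // fx proj_sum (sum_setID _ P Z) [X in _ + X]big1 ?addr0.
    by apply: eq_bigr => s /setIP[_ sZ]; apply: proj_S; exact: (subsetP ZS).
  move=> s; rewrite inE => /andP[sZ sP']; apply: proj_C.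
  by have := subsetP sP s sP'; rewrite inE (negbTE sZ).
case/spanP => V sV phx.
pose Q := Z :&: phi @^-1: V.
have QS : Q \subset Sc by apply: subset_trans (subsetIl _ _) ZS.
have eQ : phi @: Q = V.
  apply/setP => v; apply/imsetP/idP => [[z /setIP[_]]|vV]; first by rewrite inE => ? ->.
  have := subsetP sV v vV; case/imsetP => z zZ E; exists z => //.
  by rewrite !inE zZ -E vV.
have sumQ : phi x = \sum_(s in Q) phi s.
  rewrite phx -eQ big_imset //; move=> a b aQ bQ; apply: phi_inj; exact: (subsetP QS).
pose g := f x + \sum_(s in Q) f s.
have pg : proj g = 0.
  rewrite /g proj_add proj_sum proj_S //.
  have -> : \sum_(s in Q) proj (f s) = \sum_(s in Q) phi s.
    by apply: eq_bigr => s sQ; rewrite proj_S // (subsetP QS).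
  by rewrite -sumQ mxaddvv.
pose Rs := [set c | ~~ isJ c & g 0 (enum_rank c) == 1].
pose R := cel @: Rs.
have RC : R \subset Cc.
  by apply: imsetS; apply/subsetP => c; rewrite !inE => /andP[].
have gR : g = \sum_(s in R) f s.
  rewrite big_imset /=; last by move=> a b _ _; exact: cel_inj.
  rewrite vec_sum [LHS]vec_row; apply: vec_eq => c'.
  rewrite (eq_bigr (fun c => ((c' == c)%:R : 'F_2))); last by move=> c _; rewrite Fcel.
  rewrite sum_delta inE.
  case J: (isJ c') => /=.
    move: c' J => [[[j|]|]|] //= _; have := congr1 (fun v : 'rV_k => v 0 j) pg.
    by rewrite mxE => ->; rewrite mxE.
  by case: (F2cases (g 0 (enum_rank c'))) => ->.
apply/spanP; exists (Q :|: R).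
  by apply: setUSS; [exact: subsetIl | exact: RC].
rewrite (sum_setID _ (Q :|: R) Q).
have -> : (Q :|: R) :&: Q = Q by apply/setP => t; rewrite in_setI in_setU; case: (t \in Q); rewrite ?andbT ?andbF ?orbT.
have -> : (Q :|: R) :\: Q = R.
  apply/setP => t; rewrite in_setD in_setU; case tQ: (t \in Q) => /=; last by [].
  apply/esym/negP => tR; have := S_C (subsetP QS t tQ); by rewrite (subsetP RC t tR).
rewrite -gR /g addrA [X in X + _]addrC -addrA mxaddvv addr0 //.
Qed.

Lemma rk_formula (Z : {set TT}) : Z \subset Sc -> rk (Z :|: Cc) = (#|Cc| + rkP (phi @: Z))%N.
Proof.
elim/set_ind: Z => [|x Z xZ IH] H.
  rewrite set0U imset0 (rk0 (fun v : 'rV['F_2]_k => v)) addn0; apply: U_indep; exact: C_U.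
have xS : x \in Sc by apply: (subsetP H); exact: setU11.
have ZS : Z \subset Sc by apply: subset_trans H; exact: subsetUr.
by rewrite -setUA imsetU1 !rkU1 IH // span_equiv // addnA.
Qed.

Lemma phiS : phi @: Sc = [set v : 'rV['F_2]_k | v != 0].
Proof.
rewrite /Sc -imset_comp; apply/setP => v; apply/imsetP/idP => [[w wP ->] //|vP].
by exists v.
Qed.

Lemma gS : setT :\: (Cc :|: Dc) = Sc.
Proof.
apply/setP => t; rewrite in_setD in_setU in_setC in_setU in_setT andbT; case tS: (t \in Sc); rewrite ?orbT ?orbF; first exact: S_C. by case: (t \in Cc).
Qed.

Lemma gD : setT :\: Dc = Sc :|: Cc.
Proof. by apply/setP => t; rewrite in_setD in_setC in_setU in_setT andbT negbK orbC in_setU. Qed.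

Lemma minor_ok : has_minor_iso N (PG2 k).
Proof.
exists Cc, Dc; split; [exact: subsetT | exact: subsetT | |].
  by rewrite disjoints_subset /Dc setCK subsetUl.
exists phi; split.
- rewrite /= gS; exact: phi_inj.
- by rewrite /= gS phiS.
move=> B; rewrite /= gS => BS.
rewrite inE [RHS]inE vbasisE BS /=.
have sU : forall W : {set TT}, Cc \subset W -> (y0 \in W) && (xa pc \in W).
  by move=> W sW; rewrite (subsetP sW _ y0_C) (subsetP sW _ xp_C).
have mr : forall W : {set TT}, Cc \subset W -> mrank N W = rk W.
  by move=> W sW; case/andP: (sU W sW) => a b; exact: mrankN.
rewrite gD !mr ?subsetUr ?subxx // rk_formula // rk_formula ?subxx // (U_indep (Z := Cc) C_U).
rewrite phiS (card_in_imset (sub_in2 (subsetP BS) phi_inj)).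
have -> : phi @: B \subset [set v : 'rV['F_2]_k | v != 0] by rewrite -phiS imsetS.
have rle : (rkP (phi @: B) <= rkP [set v : 'rV['F_2]_k | v != 0%R])%N by rewrite rkS // -phiS imsetS.
rewrite [(#|B| + _)%N]addnC !eqn_add2l /=.
case: eqP => [<-|] //=; by rewrite eqn_leq rle.
Qed.

Lemma in_D_N : in_D N.
Proof.
exists M, X, Y; split; split.
- exact: is_matroid_vm.
- by exists #|{: A}|, f => B; rewrite /M /= inE.
- exact: M_connected.
- exact: X_ch.
- exact: Y_ch.
- by rewrite disjoints_subset; apply/subsetP => t; rewrite !inE; case: t.
- by apply/setP => t; rewrite !inE; case: t.
- by [].
Qed.

End Constr.

Theorem mainTheorem16 (k : nat) :
  odd k ->
  exists (T : finType) (N : matroid T), in_D N /\ has_minor_iso N (PG2 k).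
Proof. move=> kodd; exists (TT k), (N k); split; [exact: in_D_N | exact: minor_ok]. Qed.
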